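(* Let $G = (V, E, b, c)$ be a weighted hypergraph in which every vertex belongs to some edge, let $\mathtt{OPT}$ be a minimum-cost edge cover of $G$, and run procedure COVER on the stream of edges of $G$. Let $0 < \epsilon < 1$ and let $r^*$ be the largest integer such that $b(I(\leq r^* )) \leq \epsilon \cdot b(V)$, where $I(\leq r) = \{ v \in V \mid \mathrm{eff}_\infty(v) \leq r \}$. Then the edge collection $S(> r^* ) = \{ e \in E \mid \exists v \in V \text{ with } \mathrm{eff}_\infty(v) > r^* \text{ and } \mathrm{eid}_\infty(v) = \mathrm{id}(e) \}$ satisfies \[ c(S(> r^* )) < 8 \cdot c(\mathtt{OPT}) / \epsilon. \]
   Context: A weighted hypergraph $G = (V, E, b, c)$ has vertex set $V$, a multiset $E$ of non-empty edges $e \subseteq V$, benefits $b : V \to \mathbb{Q}_{>0}$ and costs $c : E \to \mathbb{Q}_{>0}$; $b(U) = \sum_{v \in U} b(v)$, $c(F) = \sum_{e \in F} c(e)$. An edge cover is a set $F \subseteq E$ whose union is $V$. Edges arrive in a stream $e_0, e_1, \dots$, and $\mathrm{id}(e)$ is a unique identifier of edge $e$. Procedure COVER maintains for each $v \in V$ a variable $\mathrm{eid}(v)$ (initially NULL) and an integer variable $\mathrm{eff}(v)$ (initially $-\infty$); $\mathrm{eff}_t(v)$ denotes its value just before $e_t$ is processed, and $\mathrm{eff}_\infty(v)$, $\mathrm{eid}_\infty(v)$ the values after the whole stream has been processed. For $T \subseteq e_t$ the level is $\mathrm{lev}_t(T) = \lceil \lg (b(T)/c(e_t)) \rceil$ ($\lg$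 = base-2 logarithm), and $T$ is effective at time $t$ if $\mathrm{lev}_t(T) > \mathrm{eff}_t(v)$ for every $v \in T$ (the empty set is vacuously effective). When $e_t$ arrives, COVER computes an effective subset $T \subseteq e_t$ of largest benefit $b(T)$ (any such subset) and, for every $v \in T$, sets $\mathrm{eid}(v) \leftarrow \mathrm{id}(e_t)$ and $\mathrm{eff}(v) \leftarrow \mathrm{lev}_t(T)$. *)

(* Defs.v *)
From HB Require Import structures.
From mathcomp Require Import all_boot all_order all_algebra.
From Stdlib Require Import ClassicalEpsilon.
Set Implicit Arguments. Unset Strict Implicit. Unset Printing Implicit Defensive.
Import Order.TTheory GRing.Theory Num.Theory.
Local Open Scope ring_scope.

(* ceil (lg q) for q > 0 : the (unique) integer k with 2^(k-1) < q <= 2^k.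
   (For q <= 0 the value is irrelevant/unspecified.) *)
Definition ceil_lg (q : rat) : int :=
  epsilon (inhabits 0%R) (fun k : int => (2%:Q ^ (k - 1) < q) && (q <= 2%:Q ^ k)).

Definition bsum (V : finType) (b : V -> rat) (A : {set V}) : rat :=
  \sum_(v in A) b v.

Definition cost (m : nat) (c : nat -> rat) (F : {set 'I_m}) : rat :=
  \sum_(i in F) c i.

(* The stream is e_0, ..., e_(m-1) with costs c 0, ..., c (m-1); id(e_t) = t. *)

Definition lev (V : finType) (b : V -> rat) (c : nat -> rat) (t : nat)
  (T : {set V}) : int := ceil_lg (bsum b T / c t).

(* eff values: None encodes -infinity *)
Definition lt_eff (o : option int) (k : int) : bool :=
  if o is Some x then x < k else true.
Definition le_eff (o : option int) (r : int) : bool :=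
  if o is Some x then x <= r else true.
Definition gt_eff (o : option int) (r : int) : bool :=
  if o is Some x then r < x else false.

Definition effective (V : finType) (b : V -> rat) (c : nat -> rat)
  (eff : V -> option int) (t : nat) (T : {set V}) : bool :=
  [forall v in T, lt_eff (eff v) (lev b c t T)].

(* State (eff, eid) of COVER just before e_t is processed, given the
   subsets T t chosen at each step. eid None = NULL. *)
Fixpoint cover_state (V : finType) (b : V -> rat) (c : nat -> rat)
  (T : nat -> {set V}) (t : nat) : (V -> option int) * (V -> option nat) :=
  match t with
  | 0 => (fun _ => None, fun _ => None)
  | t'.+1 =>
      let st := cover_state b c T t' in
      (fun v => if v \in T t' then Some (lev b c t' (T t')) else st.1 v,
       fun v => if v \in T t' then Some t' else st.2 v)
  end.

Definition valid_run (V : finType) (b : V -> rat) (e : nat -> {set V})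
  (c : nat -> rat) (m : nat) (T : nat -> {set V}) : Prop :=
  forall t, (t < m)%N ->
    [/\ T t \subset e t,
        effective b c (cover_state b c T t).1 t (T t) &
        forall T' : {set V}, T' \subset e t ->
          effective b c (cover_state b c T t).1 t T' ->
          bsum b T' <= bsum b (T t)].

Definition eff_inf (V : finType) (b : V -> rat) (c : nat -> rat)
  (T : nat -> {set V}) (m : nat) : V -> option int := (cover_state b c T m).1.
Definition eid_inf (V : finType) (b : V -> rat) (c : nat -> rat)
  (T : nat -> {set V}) (m : nat) : V -> option nat := (cover_state b c T m).2.

Definition is_edge_cover (V : finType) (m : nat) (e : nat -> {set V})
  (F : {set 'I_m}) : Prop :=
  forall v : V, exists2 i : 'I_m, i \in F & v \in e i.

Definition I_le (V : finType) (b : V -> rat) (c : nat -> rat)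
  (T : nat -> {set V}) (m : nat) (r : int) : {set V} :=
  [set v | le_eff (eff_inf b c T m v) r].

Definition S_gt (V : finType) (b : V -> rat) (c : nat -> rat)
  (T : nat -> {set V}) (m : nat) (r : int) : {set 'I_m} :=
  [set i : 'I_m | [exists v : V,
     gt_eff (eff_inf b c T m v) r && (eid_inf b c T m v == Some (i : nat))]].

(* Main.v *)
Require Import Defs.
From HB Require Import structures.
From mathcomp Require Import all_boot all_order all_algebra.
From Stdlib Require Import ClassicalEpsilon.
From mathcomp Require Import ring lra zify.
Import Order.TTheory GRing.Theory Num.Theory.
Set Implicit Arguments. Unset Strict Implicit. Unset Printing Implicit Defensive.
Local Open Scope ring_scope.

Lemma nat_lt_pow2 (n : nat) : (n%:R : rat) < 2%:Q ^+ n.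
Proof. by rewrite -natrX ltr_nat ltn_expl. Qed.

Lemma ceil_lg_spec (q : rat) : 0 < q ->
  (2%:Q ^ (ceil_lg q - 1) < q) && (q <= 2%:Q ^ ceil_lg q).
Proof.
move=> q0; rewrite /ceil_lg; apply: (epsilon_spec (inhabits 0%R)
  (fun k : int => (2%:Q ^ (k - 1) < q) && (q <= 2%:Q ^ k))).
pose N := (Num.bound (Num.max q q^-1)).
have hN : Num.max q q^-1 < N%:R.
  by apply: archi_boundP; rewrite le_max ltW.
have hq : q <= 2%:Q ^ (N%:Z) by apply: ltW; apply: lt_trans (nat_lt_pow2 N);
  apply: le_lt_trans hN; rewrite le_max lexx.
have hqi : 2%:Q ^ (- N%:Z) < q.
  rewrite -invr_expz -[q]invrK ltf_pV2 ?posrE ?invr_gt0 ?exprz_gt0 //.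
  by apply: lt_trans (nat_lt_pow2 N); apply: le_lt_trans hN; rewrite le_max lexx orbT.
pose P j := q <= 2%:Q ^ (j%:Z - N%:Z).
have exP : exists j, P j by exists (N + N)%N; rewrite /P PoszD addrK.
case: (ex_minnP exP) => j Pj minj.
case: j Pj minj => [|j] Pj minj.
  by move: Pj; rewrite /P sub0r leNgt hqi.
exists (j.+1%:Z - N%:Z); apply/andP; split; last exact: Pj.
have -> : j.+1%:Z - N%:Z - 1 = j%:Z - N%:Z.
  by rewrite -addn1 PoszD addrAC addrK.
rewrite ltNge; apply/negP => Pj'.
by have := minj j Pj'; rewrite ltnn.
Qed.

Lemma ceil_lg_lb (q : rat) : 0 < q -> 2%:Q ^ (ceil_lg q - 1) < q.
Proof. by move/ceil_lg_spec/andP=> []. Qed.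
Lemma ceil_lg_ub (q : rat) : 0 < q -> q <= 2%:Q ^ (ceil_lg q).
Proof. by move/ceil_lg_spec/andP=> []. Qed.

Lemma ceil_lg_gt (q : rat) (r : int) : 0 < q -> 2%:Q ^ r < q -> r < ceil_lg q.
Proof.
move=> q0 hr; have := lt_le_trans hr (ceil_lg_ub q0).
by rewrite ltr_eXz2l // ltr1n.
Qed.

Lemma ceil_lg_mono (q q' : rat) : 0 < q -> q <= q' -> ceil_lg q <= ceil_lg q'.
Proof.
move=> q0 le; have q'0 := lt_le_trans q0 le.
have := lt_le_trans (ceil_lg_lb q0) (le_trans le (ceil_lg_ub q'0)).
by rewrite ltr_eXz2l ?ltr1n // ltrBlDr ltzD1.
Qed.

Lemma lt_eff_le o (a b : int) : lt_eff o a -> a <= b -> lt_eff o b.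
Proof. by case: o => //= x h1 h2; exact: lt_le_trans h1 h2. Qed.

Lemma le_lt_eff o (r a : int) : le_eff o r -> r < a -> lt_eff o a.
Proof. by case: o => //= x h1 h2; exact: le_lt_trans h1 h2. Qed.

Lemma lt_le_eff o (a r : int) : lt_eff o a -> a <= r -> le_eff o r.
Proof. by case: o => //= x h1 h2; apply: ltW; exact: lt_le_trans h1 h2. Qed.

Section Cover.
Variables (V : finType) (b : V -> rat) (m : nat) (e : nat -> {set V})
  (c : nat -> rat) (T : nat -> {set V}).
Hypothesis hb : forall v, 0 < b v.
Hypothesis hc : forall t, (t < m)%N -> 0 < c t.
Hypothesis hrun : valid_run b e c m T.

Local Notation eff t := (cover_state b c T t).1.
Local Notation eid t := (cover_state b c T t).2.
Local Notation L t := (lev b c t (T t)).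

Lemma eff_succ t v : eff t.+1 v = if v \in T t then Some (L t) else eff t v.
Proof. by []. Qed.

Lemma eid_spec t v i : eid t v = Some i ->
  [/\ (i < t)%N, v \in T i & eff t v = Some (L i)].
Proof.
elim: t => [//|t IH] /=.
case: ifP => vT.
  by case=> <-; split.
by case/IH=> h1 h2 h3; split=> //; apply: ltnW.
Qed.

Lemma eff_eff t v : (t < m)%N -> v \in T t -> lt_eff (eff t v) (L t).
Proof.
move=> tm vT; case: (hrun tm) => _ /forall_inP H _; exact: H.
Qed.

Lemma le_eff_step t v r : (t < m)%N -> le_eff (eff t.+1 v) r -> le_eff (eff t v) r.
Proof.
move=> tm; rewrite eff_succ; case: ifP => // vT /= hL.
exact: lt_le_eff (eff_eff tm vT) hL.
Qed.

Lemma le_eff_back t v r : (t <= m)%N -> le_eff (eff m v) r -> le_eff (eff t v) r.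
Proof.
move=> tm h; rewrite -(subKn tm); elim: (m - t)%N (leq_subr t m) => [|k IH] km.
  by rewrite subn0.
apply: le_eff_step; first by rewrite -subn_gt0 subKn // ltnW.
by rewrite subnSK // IH // ltnW.
Qed.

Lemma in_T_not_le t v r : (t < m)%N -> v \in T t -> r < L t ->
  ~~ le_eff (eff m v) r.
Proof.
move=> tm vT hr; apply/negP => h.
have := le_eff_back tm h; rewrite eff_succ vT /=.
by rewrite leNgt hr.
Qed.

Lemma bsum_ge0 (A : {set V}) : 0 <= bsum b A.
Proof. by apply: sumr_ge0 => v _; apply: ltW. Qed.

Lemma bsum_gt0 (A : {set V}) : A != set0 -> 0 < bsum b A.
Proof.
case/set0Pn=> v vA; rewrite /bsum (bigD1 v) //=.
by apply: lt_le_trans (hb v) _; rewrite lerDl sumr_ge0 // => w _; apply: ltW.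
Qed.

Lemma bsum_mono (A B : {set V}) : A \subset B -> bsum b A <= bsum b B.
Proof.
move=> sAB; rewrite /bsum [X in _ <= X](big_setID A) /= (setIidPr sAB) lerDl.
by apply: sumr_ge0 => w _; apply: ltW.
Qed.

Lemma lev_mono t (A B : {set V}) : (t < m)%N -> A != set0 -> A \subset B ->
  lev b c t A <= lev b c t B.
Proof.
move=> tm A0 sAB; apply: ceil_lg_mono.
  by rewrite divr_gt0 // ?bsum_gt0 ?hc.
by rewrite ler_pM2r ?invr_gt0 ?hc // bsum_mono.
Qed.

Lemma edge_bound (r : int) i : (i < m)%N ->
  bsum b (e i :&: [set v | le_eff (eff m v) r]) <= 2%:Q ^ r * c i.
Proof.
move=> im; set U := e i :&: _.
rewrite leNgt; apply/negP => hU.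
have ci := hc im.
have U0 : U != set0.
  apply/negP => /eqP U0; move: hU; rewrite U0 /bsum big_set0 ltNge.
  by rewrite mulr_ge0 // ?exprz_ge0 // ltW.
have hq : 2%:Q ^ r < bsum b U / c i by rewrite ltr_pdivlMr.
have hLU : r < lev b c i U by apply: ceil_lg_gt => //; rewrite divr_gt0 // bsum_gt0.
have Uin v : v \in U -> le_eff (eff i v) r.
  by rewrite inE in_set => /andP [_ h]; apply: le_eff_back (ltnW im) h.
case: (hrun im) => sTe /forall_inP effT maxT.
have effU : effective b c (eff i) i U.
  by apply/forall_inP => v vU; apply: le_lt_eff (Uin v vU) hLU.
have sUe : U \subset e i by apply: subsetIl.
have bTU := maxT U sUe effU.
have T0 : T i != set0.
  apply/negP => /eqP T0; move: bTU (bsum_gt0 U0); rewrite T0 /bsum big_set0 => h1 h2.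
  by have := lt_le_trans h2 h1; rewrite ltxx.
have hLT : lev b c i U <= L i.
  apply: ceil_lg_mono; first by rewrite divr_gt0 // bsum_gt0.
  by rewrite ler_pM2r ?invr_gt0.
have disj : [disjoint T i & U].
  apply/pred0P => v /=; apply/negP => /andP [vT vU].
  move: vU; rewrite inE in_set => /andP [_ h].
  by move: (in_T_not_le im vT (lt_le_trans hLU hLT)); rewrite h.
set W := T i :|: U.
have hW1 : L i <= lev b c i W by apply: lev_mono => //; apply: subsetUl.
have hW2 : lev b c i U <= lev b c i W by apply: lev_mono => //; apply: subsetUr.
have effW : effective b c (eff i) i W.
  apply/forall_inP => v; rewrite in_setU => /orP [vT|vU].
    exact: lt_eff_le (effT v vT) hW1.
  exact: le_lt_eff (Uin v vU) (lt_le_trans hLU hW2).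
have sWe : W \subset e i by rewrite subUset sTe.
have := maxT W sWe effW.
have eW : bsum b W = bsum b (T i) + bsum b U.
  rewrite /bsum /W -bigU //; apply: eq_bigl => v; by rewrite !inE.
rewrite eW gerDl leNgt bsum_gt0 //.
Qed.


Lemma I_bound (OPT : {set 'I_m}) r : is_edge_cover e OPT ->
  bsum b [set v | le_eff (eff m v) r] <= 2%:Q ^ r * cost c OPT.
Proof.
move=> hcov; set I := [set v | _].
apply: (@le_trans _ _ (\sum_(i in OPT) bsum b (e i :&: I))); last first.
  rewrite /cost mulr_sumr; apply: ler_sum => i _; exact: edge_bound.
have -> : \sum_(i in OPT) bsum b (e i :&: I) =
    \sum_(v in I) \sum_(i in OPT | v \in e i) b v.
  rewrite (exchange_big_dep (fun i : 'I_m => i \in OPT)) /=; last by move=> v i _ /andP [].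
  apply: eq_bigr => i iO; rewrite /bsum; apply: eq_bigl => v; by rewrite !inE iO andbC.
rewrite /bsum; apply: ler_sum => v vI.
case: (hcov v) => i iO ve.
rewrite (bigD1 i) /=; last by rewrite iO ve.
by rewrite lerDl sumr_ge0 // => j _; apply: ltW.
Qed.

Variable rs : int.
Definition pot (o : option int) : rat :=
  if o is Some x then (if rs < x then 2%:Q ^ (1 - rs) - 2%:Q ^ (1 - x) else 0) else 0.

Lemma pow2_mul1 (k : int) : 2%:Q * 2%:Q ^ (1 - k) = 2%:Q ^ (2 - k).
Proof. by rewrite -{1}(expr1z 2%:Q) -expfzDr // addrA. Qed.

Lemma pot_ge0 o : 0 <= pot o.
Proof.
case: o => //= x; case: ifP => // h.
by rewrite subr_ge0 ler_eXz2l ?ltr1n //; lia.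
Qed.

Lemma pot_le o : pot o <= 2%:Q ^ (1 - rs).
Proof.
case: o => [x|] /=; last exact: exprz_ge0.
case: ifP => _; last exact: exprz_ge0.
by rewrite lerBlDr lerDl exprz_ge0.
Qed.

Lemma pot_key o (K : int) : rs < K -> lt_eff o K ->
  2%:Q ^ (1 - K) <= pot (Some K) - pot o.
Proof.
move=> hK; rewrite /= hK.
have h2 := pow2_mul1 K.
case: o => [x|] /= hx.
  case: ifP => hr.
    have : 2%:Q ^ (2 - K) <= 2%:Q ^ (1 - x) by rewrite ler_eXz2l ?ltr1n //; lia.
    lra.
  have : 2%:Q ^ (2 - K) <= 2%:Q ^ (1 - rs) by rewrite ler_eXz2l ?ltr1n //; lia.
  lra.
have : 2%:Q ^ (2 - K) <= 2%:Q ^ (1 - rs) by rewrite ler_eXz2l ?ltr1n //; lia.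
lra.
Qed.

Lemma pot_mono o (K : int) : lt_eff o K -> pot o <= pot (Some K).
Proof.
move=> ho; case: (ltP rs K) => hK.
  have := pot_key hK ho; have := exprz_ge0 (1 - K) (ler0n _ 2 : (0 : rat) <= 2%:R).
  lra.
rewrite /= ltNge hK /=.
case: o ho => [x|] //= hx.
by case: ifP => // hr; exfalso; lia.
Qed.

Definition Aset i := (T i != set0) && (rs < L i).

Lemma main_sum t : (t <= m)%N ->
  \sum_(0 <= i < t) (if Aset i then c i else 0) <= \sum_v b v * pot (eff t v).
Proof.
elim: t => [_|t IH tm].
  by rewrite big_geq // sumr_ge0 // => v _; rewrite mulr_ge0 ?pot_ge0 // ltW.
rewrite big_nat_recr //=.
have -> : \sum_v b v * pot (eff t.+1 v) = \sum_v b v * pot (eff t v) +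
    \sum_(v in T t) b v * (pot (Some (L t)) - pot (eff t v)).
  rewrite [X in _ = _ + X]big_mkcond -big_split /=; apply: eq_bigr => v _.
  case: ifP => vT; last by rewrite addr0.
  by rewrite mulrBr addrC subrK.
apply: lerD; first exact: IH (ltnW tm).
case: ifP => hA.
  case/andP: hA => T0 hr.
  have ct := hc tm.
  have hlb : 2%:Q ^ (L t - 1) < bsum b (T t) / c t.
    by apply: ceil_lg_lb; rewrite divr_gt0 // bsum_gt0.
  rewrite ltr_pdivlMr // in hlb.
  have e1 : 2%:Q ^ (L t - 1) * 2%:Q ^ (1 - L t) = 1.
    rewrite -expfzDr // (_ : L t - 1 + (1 - L t) = 0) ?expr0z //; lia.
  have hct : c t <= bsum b (T t) * 2%:Q ^ (1 - L t).
    rewrite [X in X <= _](_ : _ = 2%:Q ^ (L t - 1) * c t * 2%:Q ^ (1 - L t)); last by rewrite mulrAC e1 mul1r.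
    apply: ler_wpM2r (ltW hlb).
    exact: exprz_ge0.
  apply: le_trans hct _; rewrite /bsum mulr_suml; apply: ler_sum => v vT.
  apply: ler_wpM2l; first exact: ltW.
  apply: pot_key => //; exact: eff_eff.
apply: sumr_ge0 => v vT; apply: mulr_ge0; first exact: ltW.
rewrite subr_ge0.
by apply: pot_mono; apply: eff_eff.
Qed.

End Cover.

Theorem lemma11 (V : finType) (b : V -> rat) (m : nat) (e : nat -> {set V})
  (c : nat -> rat) (T : nat -> {set V}) (OPT : {set 'I_m}) (eps : rat)
  (rstar : int) :
  (forall v, 0 < b v) ->
  (forall t, (t < m)%N -> e t != set0) ->
  (forall t, (t < m)%N -> 0 < c t) ->
  (forall v : V, exists i : 'I_m, v \in e i) ->
  is_edge_cover e OPT ->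
  (forall F : {set 'I_m}, is_edge_cover e F -> cost c OPT <= cost c F) ->
  valid_run b e c m T ->
  0 < eps < 1 ->
  bsum b (I_le b c T m rstar) <= eps * bsum b setT ->
  (forall r : int, bsum b (I_le b c T m r) <= eps * bsum b setT -> r <= rstar) ->
  cost c (S_gt b c T m rstar) < 8 * cost c OPT / eps.
Proof.
move=> hb hne hc hcov hOcov hOmin hrun /andP[eps0 eps1] hrle hrmax.
have X0 : 0 <= cost c OPT by apply: sumr_ge0 => i _; apply: ltW; apply: hc.
have hS : cost c (S_gt b c T m rstar) <=
    \sum_(0 <= i < m) (if Aset b c T rstar i then c i else 0).
  rewrite big_mkord /cost [X in X <= _]big_mkcond /=; apply: ler_sum => i _.
  case: ifP => iS.
    suff -> : Aset b c T rstar i by [].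
    move: iS; rewrite inE => /existsP [v /andP [hg /eqP hid]].
    case: (eid_spec hid) => _ vT heff.
    rewrite /Aset; apply/andP; split; first by apply/set0Pn; exists v.
    by move: hg; rewrite /eff_inf heff.
  by case: ifP => // _; apply: ltW; apply: hc.
have hsum := main_sum hb hc hrun rstar (leqnn m).
have hpot : \sum_v b v * pot rstar ((cover_state b c T m).1 v)
    <= 2%:Q ^ (1 - rstar) * bsum b setT.
  have -> : bsum b setT = \sum_v b v by apply: eq_bigl => v; rewrite inE.
  rewrite mulr_sumr; apply: ler_sum => v _; rewrite mulrC.
  apply: ler_wpM2r; [exact: ltW | exact: pot_le].
have hI := I_bound hb hc hrun (rstar + 1) hOcov.
have hgt : eps * bsum b setT < bsum b (I_le b c T m (rstar + 1)).
  rewrite ltNge; apply/negP => h; have := hrmax _ h; lia.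
have K : 2%:Q ^ (1 - rstar) * 2%:Q ^ (rstar + 1) = 4.
  rewrite -expfzDr // (_ : 1 - rstar + (rstar + 1) = 2%:Z) //; lia.
have Kp : 0 < 2%:Q ^ (1 - rstar) by apply: exprz_gt0.
rewrite ltr_pdivlMr //.
move: hS hsum hpot hI hgt K Kp X0 eps0.
rewrite /I_le /eff_inf.
set CS := cost c _; set Sm := \sum_(0 <= i < m) _; set Pm := \sum_v _.
set B := bsum b setT; set BI := bsum b _; set X := cost c OPT.
set k1 := 2%:Q ^ (1 - rstar); set k2 := 2%:Q ^ (rstar + 1).
move=> *; nra.
Qed.
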